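(* Let $t$ be an indeterminate. For all integers $n\ge1$ and $l\ge1$, $$\sum_{\substack{\lambda:\ |\lambda|=n,\\ \ell(\lambda)=l}} t^{2n(\lambda)}\frac{(t;t)_l}{(t;t)_{m_1(\lambda)}(t;t)_{m_2(\lambda)}\cdots(t;t)_{m_n(\lambda)}}=t^{l(l-1)}\begin{bmatrix}n-1\\ l-1\end{bmatrix}_t .$$
   Context: For a partition $\lambda$: $|\lambda|=\sum_i\lambda_i$, $\ell(\lambda)$ is the number of nonzero parts, $n(\lambda)=\sum_{i\ge1}(i-1)\lambda_i$, and $m_j(\lambda)=\#\{i:\lambda_i=j\}$. $(x;t)_m=\prod_{i=1}^m(1-xt^{i-1})$, $(x;t)_0=1$, and $\begin{bmatrix} a\\ b\end{bmatrix}_t=\frac{(t;t)_a}{(t;t)_b(t;t)_{a-b}}$ for $0\le b\le a$, $0$ otherwise. *)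

(* Defs.v *)
From HB Require Import structures.
From mathcomp Require Import all_boot all_order all_algebra fraction.
Set Implicit Arguments. Unset Strict Implicit. Unset Printing Implicit Defensive.
Import Order.TTheory GRing.Theory Num.Theory.
Local Open Scope ring_scope.

Definition is_partition (n : nat) (s : seq nat) : bool :=
  [&& sorted geq s, all (fun x => 0 < x)%N s & sumn s == n].

(* n(lambda) = sum_{i>=1} (i-1) lambda_i  (0-based index i below) *)
Definition nfun (s : seq nat) : nat := (\sum_(i < size s) i * nth 0 s i)%N.

Definition mult (j : nat) (s : seq nat) : nat := count_mem j s.

Definition qpoch (R : comNzRingType) (x t : R) (m : nat) : R :=
  \prod_(i < m) (1 - x * t ^+ i).

Definition qbinom (F : fieldType) (t : F) (a b : nat) : F :=
  if (b <= a)%N then qpoch t t a / (qpoch t t b * qpoch t t (a - b)) else 0.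

(* The indeterminate t, as an element of the field of rational functions Q(t)
   (built over Z[t]). *)
Definition Frt := {fraction {poly int}}.
Definition tq : Frt := @FracField.tofrac _ ('X : {poly int}).

(* Main.v *)
Require Import Defs.
From HB Require Import structures.
From mathcomp Require Import all_boot all_order all_algebra fraction.
From mathcomp Require Import ring lra zify.
Set Implicit Arguments. Unset Strict Implicit. Unset Printing Implicit Defensive.
Import GRing.Theory.
Local Open Scope ring_scope.

Lemma qpochS (F : fieldType) (t : F) m : qpoch t t m.+1 = qpoch t t m * (1 - t ^+ m.+1).
Proof. by rewrite /qpoch big_ord_recr /= exprS. Qed.

Lemma qbE (F : fieldType) (t : F) b c :
  qbinom t (b + c) b = qpoch t t (b + c) / (qpoch t t b * qpoch t t c).
Proof. by rewrite /qbinom leq_addr addKn. Qed.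

Lemma qb_gt (F : fieldType) (t : F) a b : (a < b)%N -> qbinom t a b = 0.
Proof. by rewrite /qbinom ltnNge => /negbTE ->. Qed.

Lemma qb0 (F : fieldType) (t : F) (Hq : forall m, qpoch t t m != 0) a : qbinom t a 0 = 1.
Proof. have := qbE t 0 a; rewrite add0n => ->. by rewrite {2}/qpoch big_ord0 mul1r divff. Qed.

Lemma qbaa (F : fieldType) (t : F) (Hq : forall m, qpoch t t m != 0) a : qbinom t a a = 1.
Proof. have := qbE t a 0; rewrite addn0 => ->. by rewrite {3}/qpoch big_ord0 mulr1 divff. Qed.

Lemma qb_sym (F : fieldType) (t : F) a b : (b <= a)%N -> qbinom t a b = qbinom t a (a - b).
Proof.
by move=> hb; rewrite /qbinom hb leq_subr subKn // [qpoch t t b * _]mulrC.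
Qed.

Lemma pascal1 (F : fieldType) (t : F) (Hq : forall m, qpoch t t m != 0) a b :
  qbinom t a.+1 b.+1 = qbinom t a b + t ^+ b.+1 * qbinom t a b.+1.
Proof.
case: (ltngtP a b) => hab.
- by rewrite !qb_gt // ?ltnS // ?mulr0 ?addr0 // ltnW.
- have [c ->] : exists c, a = (b + c.+1)%N by exists (a - b.+1)%N; lia.
  have -> : (b + c.+1).+1 = (b.+1 + c.+1)%N by lia.
  rewrite qbE qbE.
  have -> : (b + c.+1)%N = (b.+1 + c)%N by lia.
  rewrite qbE !addSn !qpochS.
  have e : t ^+ (b + c).+2 = t ^+ b.+1 * t ^+ c.+1 by rewrite -exprD; congr (_ ^+ _); lia.
  rewrite !addnS !qpochS e.
  have h1 := Hq b; have h2 := Hq c; have h3 := Hq (b+c)%N.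
  have h4 : 1 - t ^+ b.+1 != 0.
    by move: (Hq b.+1); rewrite qpochS mulf_eq0 negb_or => /andP[].
  have h5 : 1 - t ^+ c.+1 != 0.
    by move: (Hq c.+1); rewrite qpochS mulf_eq0 negb_or => /andP[].
  by field; rewrite ?h1 ?h2 ?h3 ?h4 ?h5.
- subst b; rewrite qbaa // qbaa // qb_gt // mulr0 addr0 //.
Qed.

Lemma qnz1 (F : fieldType) (t : F) (Hq : forall m, qpoch t t m != 0) m : 1 - t ^+ m.+1 != 0.
Proof. by move: (Hq m.+1); rewrite qpochS mulf_eq0 negb_or => /andP[]. Qed.

Lemma pascal2 (F : fieldType) (t : F) (Hq : forall m, qpoch t t m != 0) b j :
  qbinom t b.+1 j.+1 = t ^+ (b - j) * qbinom t b j + qbinom t b j.+1.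
Proof.
case: (ltngtP b j) => hab.
- by rewrite !qb_gt // ?ltnS // ?mulr0 ?addr0 // ltnW.
- have [c ->] : exists c, b = (j + c.+1)%N by exists (b - j.+1)%N; lia.
  have -> : (j + c.+1).+1 = (j.+1 + c.+1)%N by lia.
  rewrite qbE qbE.
  have -> : (j + c.+1)%N = (j.+1 + c)%N by lia.
  rewrite qbE !addSn !addnS !qpochS.
  have -> : (j.+1 + c - j)%N = c.+1 by lia.
  have e : t ^+ (j + c).+2 = t ^+ j.+1 * t ^+ c.+1 by rewrite -exprD; congr (_ ^+ _); lia.
  rewrite e.
  have h1 := Hq j; have h2 := Hq c; have h3 := Hq (j+c)%N.
  have h4 := qnz1 Hq j; have h5 := qnz1 Hq c.
  by field; rewrite ?h1 ?h2 ?h3 ?h4 ?h5.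
- subst b; rewrite qbaa // qbaa // qb_gt // subnn expr0 mul1r addr0 //.
Qed.

Lemma vandermonde (F : fieldType) (t : F) (Hq : forall m, qpoch t t m != 0) a b :
  forall e K, (b < K)%N ->
  \sum_(j < K) qbinom t a (j + e) * qbinom t b j * t ^+ (j * (j + e))
  = qbinom t (a + b) (b + e).
Proof.
elim: b => [|b IH] e K hK.
  case: K hK => // K _; rewrite big_ord_recl /= big1 ?addr0.
    by rewrite qb0 // mulr1 mulr1 addn0 add0n.
  by move=> i _; rewrite (@qb_gt _ t 0) // mulr0 mul0r.
case: K hK => // K hK.
rewrite big_ord_recl /=.
under eq_bigr => i _ do rewrite /bump /= add1n pascal2 // mulrDr mulrDl.
rewrite big_split /= [X in _ + X]addrC addrA.
have -> : qbinom t a (0 + e) * qbinom t b.+1 0 * t ^+ (0 * (0 + e)) +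
   \sum_(i < K) qbinom t a (i.+1 + e) * qbinom t b i.+1 * t ^+ (i.+1 * (i.+1 + e))
   = qbinom t (a + b) (b + e).
  rewrite -(IH e K.+1); last by lia.
  rewrite big_ord_recl qb0 // qb0 //; congr (_ + _).
have -> : \sum_(i < K) qbinom t a (i.+1 + e) * (t ^+ (b - i) * qbinom t b i) * t ^+ (i.+1 * (i.+1 + e))
   = t ^+ (b + e).+1 * \sum_(i < K) qbinom t a (i + e.+1) * qbinom t b i * t ^+ (i * (i + e.+1)).
  rewrite mulr_sumr; apply: eq_bigr => i _.
  case: (leqP i b) => hib; last by rewrite (qb_gt t hib) !(mulr0, mul0r).
  rewrite addSnnS -!mulrA.
  have H : t ^+ (b - i) * t ^+ (i.+1 * (i + e.+1)) = t ^+ (b + e).+1 * t ^+ (i * (i + e.+1)) by rewrite -!exprD; congr (_ ^+ _); nia.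
  rewrite [t ^+ (b - i) * _]mulrCA H; set X := t ^+ _; set Y := t ^+ _; ring.
rewrite IH; last by lia.
by rewrite !addnS addSn pascal1.
Qed.

Lemma geq_tr : transitive geq.
Proof. by move=> x y z /= h1 h2; exact: leq_trans h2 h1. Qed.

Lemma mem_le_sumn (s : seq nat) x : x \in s -> (x <= sumn s)%N.
Proof. elim: s => //= a s IH; rewrite in_cons => /orP[/eqP->|/IH h]; lia. Qed.

Lemma size_le_sumn (s : seq nat) : all (fun y => 0 < y)%N s -> (size s <= sumn s)%N.
Proof. elim: s => //= a s IH /andP[ha /IH h]; lia. Qed.

Lemma filter_nil_all (T : Type) (P : pred T) s : all (fun y => ~~ P y) s -> filter P s = [::].
Proof. by elim: s => //= y s IH /andP[/negbTE -> /IH ->]. Qed.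

Lemma sorted_split (s : seq nat) c : sorted geq s ->
  s = filter (fun y => c < y)%N s ++ filter (fun y => ~~ (c < y))%N s.
Proof.
elim: s => //= a s IH hs.
have hs' := path_sorted hs.
have ha : all (geq a) s := order_path_min geq_tr hs.
case: (ltnP c a) => hca /=.
  by rewrite -IH.
have hall : all (fun y => ~~ (c < y))%N s.
  by apply/allP => y /(allP ha) /= hy; rewrite -leqNgt; exact: leq_trans hy hca.
rewrite (filter_nil_all hall) /=.
by congr (_ :: _); apply/esym/all_filterP.
Qed.

Definition ext (l : nat) (mu : seq nat) := map S mu ++ nseq (l - size mu) 1%N.
Definition dec (x : seq nat) := map predn (filter (fun y => 1 < y)%N x).

Lemma sumn_mapS (s : seq nat) : sumn (map S s) = (sumn s + size s)%N.
Proof. elim: s => //= a s ->; lia. Qed.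

Lemma size_ext l mu : (size mu <= l)%N -> size (ext l mu) = l.
Proof. by rewrite /ext size_cat size_map size_nseq => h; lia. Qed.

Lemma sumn_ext l mu : (size mu <= l)%N -> sumn (ext l mu) = (sumn mu + l)%N.
Proof. by rewrite /ext sumn_cat sumn_mapS sumn_nseq => h; lia. Qed.

Lemma dec_ext l mu : all (fun y => 0 < y)%N mu -> dec (ext l mu) = mu.
Proof.
move=> hm; rewrite /dec /ext filter_cat (@filter_nil_all _ _ (nseq _ _)) ?cats0;
  last by rewrite all_nseq orbT.
by elim: mu hm => //= y mu IH /andP[hy hmu]; rewrite ltnS hy /= IH.
Qed.

Lemma ext_dec n l x : is_partition n x -> size x = l -> ext l (dec x) = x.
Proof.
case/and3P => hsort hpos _ hsz.
have E := sorted_split 1 hsort.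
rewrite [RHS]E /ext /dec size_map; congr (_ ++ _).
  rewrite -map_comp map_id_in // => y; rewrite mem_filter => /andP[hy _] /=.
  by apply: prednK; apply: ltnW.
have hB : all (pred1 1%N) (filter (fun y => ~~ (1 < y))%N x).
  apply/allP => y; rewrite mem_filter => /andP[hy hyx].
  have := allP hpos y hyx => /= hy0; apply/eqP; lia.
rewrite [in RHS](all_pred1P _ _ hB); congr nseq.
have := congr1 size E; rewrite size_cat => h; rewrite -hsz h; by rewrite addKn.
Qed.

Lemma pairwise_nseq m : pairwise geq (nseq m 1%N).
Proof. by elim: m => //= m ->; rewrite andbT all_nseq /= orbT. Qed.

Lemma ext_part n l mu : (l <= n)%N -> is_partition (n - l) mu -> (size mu <= l)%N ->
  is_partition n (ext l mu).
Proof.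
move=> hln /and3P[hsort hpos /eqP hsum] hsz; apply/and3P; split.
- rewrite /ext (sorted_pairwise geq_tr) pairwise_cat pairwise_nseq andbT.
  apply/andP; split.
    by apply/allrelP => a b /mapP[y _ ->] /nseqP[-> _].
  rewrite -(sorted_pairwise geq_tr); apply: homo_sorted hsort => a b /=; lia.
- by rewrite /ext all_cat all_nseq orbT andbT all_map; apply/allP.
- by rewrite sumn_ext // hsum; apply/eqP; lia.
Qed.

Lemma dec_part n l x : (l <= n)%N -> is_partition n x -> size x = l ->
  is_partition (n - l) (dec x) /\ (size (dec x) <= l)%N.
Proof.
move=> hln hp hsz.
have hsz' : (size (dec x) <= l)%N by rewrite /dec size_map -hsz size_filter count_size.
split => //.
have E := ext_dec hp hsz.
case/and3P: hp => hsort hpos /eqP hsum; apply/and3P; split.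
- rewrite /dec; apply: homo_sorted; last exact: sorted_filter geq_tr _ _ hsort.
  by move=> a b /=; lia.
- rewrite /dec all_map; apply/allP => y; rewrite mem_filter => /andP[hy _] /=; lia.
- have h := sumn_ext hsz'; rewrite E in h; apply/eqP; lia.
Qed.
Lemma nfun_pad x K : (size x <= K)%N -> nfun x = (\sum_(i < K) i * nth 0 x i)%N.
Proof.
move=> h; rewrite /nfun -!(big_mkord xpredT (fun i => i * nth 0 x i))%N.
have z : (\sum_(size x <= i < K) i * nth 0 x i = 0)%N.
  rewrite big_nat_cond big1 // => i /andP[/andP[hi _] _].
  by rewrite nth_default // muln0.
by rewrite [in RHS](big_cat_nat (n := size x)) //= z addn0.
Qed.

Lemma sum_id2 l : (2 * \sum_(i < l) i = l * (l - 1))%N.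
Proof.
elim: l => [|l IH]; first by rewrite big_ord0.
rewrite big_ord_recr /= mulnDr IH; case: l {IH} => // l; nia.
Qed.

Lemma nth_ext l mu i : (i < l)%N -> nth 0 (ext l mu) i = (nth 0 mu i).+1.
Proof.
move=> hi; rewrite /ext nth_cat size_map; case: ltnP => h.
  by rewrite (nth_map 0).
by rewrite nth_nseq (nth_default _ h); case: ifP => //; lia.
Qed.

Lemma nfun_ext l mu : (size mu <= l)%N ->
  (2 * nfun (ext l mu) = 2 * nfun mu + l * (l - 1))%N.
Proof.
move=> h; rewrite (nfun_pad (K := l) h) (nfun_pad (K := l)) ?size_ext //.
rewrite -sum_id2 -mulnDr -big_split /=; congr (2 * _)%N.
by apply: eq_bigr => i _; rewrite nth_ext // mulnS addnC.
Qed.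

Lemma mult1_ext l mu : all (fun y => 0 < y)%N mu -> mult 1 (ext l mu) = (l - size mu)%N.
Proof.
move=> hp; rewrite /mult count_cat count_nseq /= mul1n count_map.
rewrite (@eq_in_count _ _ pred0) ?count_pred0 //.
by move=> y /(allP hp) /=; case: y.
Qed.

Lemma multS_ext l mu j : (0 < j)%N -> mult j.+1 (ext l mu) = mult j mu.
Proof.
move=> hj; rewrite /mult count_cat count_nseq /= count_map.
have -> : (1 == j.+1) = false by case: j hj.
by rewrite mul0n addn0; apply: eq_count => y /=.
Qed.

Definition Tp (F : fieldType) (t : F) (x : seq nat) : F :=
  t ^+ (2 * nfun x) * (qpoch t t (size x) / \prod_(1 <= j < (sumn x).+1) qpoch t t (mult j x)).

Lemma qpoch0 (F : fieldType) (t : F) : qpoch t t 0 = 1.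
Proof. by rewrite /qpoch big_ord0. Qed.

Lemma prod_ext (F : fieldType) (t : F) l mu : all (fun y => 0 < y)%N mu ->
  (size mu <= l)%N -> (1 <= l)%N ->
  \prod_(1 <= j < (sumn (ext l mu)).+1) qpoch t t (mult j (ext l mu))
  = qpoch t t (l - size mu) * \prod_(1 <= j < (sumn mu).+1) qpoch t t (mult j mu).
Proof.
move=> hp hs hl; rewrite sumn_ext // big_ltn; last by lia.
rewrite mult1_ext //; congr (_ * _).
rewrite big_add1 /=.
rewrite (@eq_big_nat _ _ _ 1 _ _ (fun j => qpoch t t (mult j mu))); last first.
  by move=> j /andP[hj _]; rewrite multS_ext.
have z : \prod_((sumn mu).+1 <= i < sumn mu + l) qpoch t t (mult i mu) = 1.
  rewrite big_nat_cond big1 // => j /andP[/andP[hj _] _].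
  rewrite /mult.
  have -> : count_mem j mu = 0%N.
    apply/eqP; rewrite -leqn0 leqNgt -has_count; apply/hasP => -[y hy /eqP hyj].
    have := mem_le_sumn hy; lia.
  exact: qpoch0.
rewrite (@big_cat_nat _ _ _ (sumn mu).+1) /=; last by lia. 2: by [].
by rewrite z mulr1.
Qed.

Lemma Tp_ext (F : fieldType) (t : F) (Hq : forall m, qpoch t t m != 0) l mu :
  all (fun y => 0 < y)%N mu -> (size mu <= l)%N -> (1 <= l)%N ->
  Tp t (ext l mu) = t ^+ (l * (l - 1)) * (qbinom t l (size mu) * Tp t mu).
Proof.
move=> hp hs hl; rewrite /Tp prod_ext // nfun_ext // size_ext // exprD.
rewrite /qbinom hs.
have hP : \prod_(1 <= j < (sumn mu).+1) qpoch t t (mult j mu) != 0.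
  by rewrite prodf_seq_neq0; apply/allP => j _; apply/implyP => _.
have h1 := Hq l; have h2 := Hq (size mu); have h3 := Hq (l - size mu)%N.
by field; rewrite ?h1 ?h2 ?h3 ?hP.
Qed.

Definition Lpart (n l : nat) : seq (seq nat) :=
  [seq x <- map (fun s : l.-tuple 'I_n.+1 => map val s) (index_enum (l.-tuple 'I_n.+1))
   | is_partition n x].

Lemma Lpart_mem n l x : (x \in Lpart n l) = (is_partition n x && (size x == l)).
Proof.
rewrite /Lpart mem_filter; apply: andb_id2l => hp.
apply/mapP/idP.
  by move=> [s _ ->]; rewrite size_map size_tuple.
move=> /eqP hs.
have hsz : size (map (@inord n) x) == l by rewrite size_map hs.
exists (Tuple hsz); first by rewrite mem_index_enum.
rewrite /= -map_comp map_id_in // => y hy /=; rewrite inordK //.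
case/and3P: hp => _ _ /eqP <-; rewrite ltnS; exact: mem_le_sumn.
Qed.

Lemma Lpart_uniq n l : uniq (Lpart n l).
Proof.
rewrite /Lpart filter_uniq // map_inj_uniq ?index_enum_uniq //.
by move=> s1 s2 /(inj_map val_inj) /val_inj.
Qed.

Lemma sum_reindex (R : nmodType) (T1 T2 : eqType) (L1 : seq T1) (L2 : seq T2)
  (f : T2 -> T1) (G : T1 -> R) :
  uniq L1 -> uniq L2 -> {in L2 &, injective f} -> L1 =i map f L2 ->
  \sum_(x <- L1) G x = \sum_(y <- L2) G (f y).
Proof.
move=> u1 u2 inj E; rewrite -(big_map f xpredT); apply: perm_big.
by apply: uniq_perm => //; rewrite map_inj_in_uniq.
Qed.

Definition Fs (F : fieldType) (t : F) n l := \sum_(x <- Lpart n l) Tp t x.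

Lemma Fs_rec (F : fieldType) (t : F) (Hq : forall m, qpoch t t m != 0) n l :
  (1 <= l)%N -> (l <= n)%N ->
  Fs t n l = t ^+ (l * (l - 1)) * \sum_(k < l.+1) qbinom t l k * Fs t (n - l) k.
Proof.
move=> hl hln; rewrite /Fs.
rewrite (@sum_reindex _ _ _ _ [seq (k, mu) | k <- index_iota 0 l.+1, mu <- Lpart (n - l) k]
   (fun p => ext l p.2)).
- rewrite big_allpairs_dep /= big_mkord mulr_sumr; apply: eq_bigr => k _.
  rewrite mulr_sumr mulr_sumr; apply: eq_big_seq => mu.
  rewrite Lpart_mem => /andP[hp /eqP hs].
  have hpos : all (fun y => 0 < y)%N mu by case/and3P: hp.
  by rewrite Tp_ext // ?hs // -ltnS.
- exact: Lpart_uniq.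
- apply: allpairs_uniq_dep; first exact: iota_uniq.
    by move=> k _; exact: Lpart_uniq.
  by move=> [k1 mu1] [k2 mu2] _ _ [-> ->].
- move=> [k1 mu1] [k2 mu2] /allpairsPdep[k1' [mu1' [hk1 hmu1 [-> ->]]]]
    /allpairsPdep[k2' [mu2' [hk2 hmu2 [-> ->]]]] /= E.
  move: hmu1 hmu2; rewrite !Lpart_mem => /andP[hp1 /eqP hs1] /andP[hp2 /eqP hs2].
  have e : mu1' = mu2'.
    by rewrite -(@dec_ext l mu1') ?E ?dec_ext //; [case/and3P: hp2 | case/and3P: hp1].
  by rewrite -hs1 -hs2 e.
- move=> x; rewrite Lpart_mem; apply/idP/mapP.
    move=> /andP[hp /eqP hs].
    have [hd hsd] := dec_part hln hp hs.
    exists (size (dec x), dec x); last by rewrite /= (ext_dec hp hs).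
    apply/allpairsPdep; exists (size (dec x)), (dec x); split => //.
      by rewrite mem_index_iota ltnS.
    by rewrite Lpart_mem hd eqxx.
  move=> [[k mu] /allpairsPdep[k' [mu' [hk hmu [-> ->]]]] ->] /=.
  move: hmu; rewrite Lpart_mem => /andP[hp /eqP hs].
  rewrite mem_index_iota in hk.
  rewrite ext_part //= ?size_ext ?hs //; lia.
Qed.

Lemma Fs_nil (F : fieldType) (t : F) n l :
  (forall x, x \in Lpart n l -> False) -> Fs t n l = 0.
Proof.
move=> h; rewrite /Fs; case E: (Lpart n l) => [|x s]; first by rewrite big_nil.
by exfalso; apply: (h x); rewrite E mem_head.
Qed.

Lemma Fs_big (F : fieldType) (t : F) n l : (n < l)%N -> Fs t n l = 0.
Proof.
move=> h; apply: Fs_nil => x; rewrite Lpart_mem => /andP[/and3P[_ hp /eqP hs] /eqP hl].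
by have := size_le_sumn hp; rewrite hs hl; lia.
Qed.

Lemma Fs_n0 (F : fieldType) (t : F) n : (0 < n)%N -> Fs t n 0 = 0.
Proof.
move=> h; apply: Fs_nil => x; rewrite Lpart_mem => /andP[/and3P[_ hp /eqP hs] hl].
by move: hl hs; rewrite size_eq0 => /eqP -> /= hs; lia.
Qed.

Lemma Fs_00 (F : fieldType) (t : F) : Fs t 0 0 = 1.
Proof.
rewrite /Fs (perm_big [:: [::]]); last first.
  apply: uniq_perm => //; first exact: Lpart_uniq.
  move=> x; rewrite Lpart_mem in_cons in_nil orbF.
  apply/idP/idP; first by move=> /andP[_]; rewrite size_eq0.
  by move=> /eqP ->.
rewrite big_cons big_nil /= addr0 /Tp /=.
have -> : nfun [::] = 0%N by rewrite /nfun big_ord0.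
by rewrite muln0 expr0 mul1r qpoch0 big_geq // divr1.
Qed.

Lemma main_gen (F : fieldType) (t : F) (Hq : forall m, qpoch t t m != 0) n :
  forall l, (1 <= n)%N -> (1 <= l)%N ->
  Fs t n l = t ^+ (l * (l - 1)) * qbinom t (n - 1) (l - 1).
Proof.
elim/ltn_ind: n => n IH l hn hl.
case: (ltnP n l) => hnl.
  by rewrite Fs_big // qb_gt ?mulr0 //; lia.
rewrite Fs_rec //; congr (_ * _).
case: (ltngtP l n) => hln; last first.
- subst l; rewrite subnn big_ord_recl /= Fs_00 qb0 // mulr1 big1 ?addr0 ?qbaa //.
  move=> i _; rewrite Fs_nil ?mulr0 // => x; rewrite Lpart_mem.
  move=> /andP[/and3P[_ hp /eqP hs] /eqP hsz].
  by have := size_le_sumn hp; rewrite hs hsz.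
- lia.
set m := (n - l)%N.
have hm : (1 <= m)%N by rewrite /m; lia.
rewrite big_ord_recl /= Fs_n0 // mulr0 add0r.
have V := @vandermonde F t Hq l (m - 1) 1%N (l + m)%N ltac:(lia).
have -> : \sum_(i < l) qbinom t l (bump 0 i) * Fs t m (bump 0 i) =
    \sum_(i < l) qbinom t l i.+1 * (t ^+ (i.+1 * (i.+1 - 1)) * qbinom t (m - 1) i).
  apply: eq_bigr => i _; rewrite /bump /= add1n IH //; last by rewrite /m; lia.
  by rewrite subn1.
have e1 : (l + (m - 1))%N = (n - 1)%N by rewrite /m; lia.
have e2 : (m - 1 + 1)%N = m by lia.
have e3 : (n - 1 - m)%N = (l - 1)%N by rewrite /m; lia.
rewrite e1 e2 qb_sym in V; last by rewrite /m; lia.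
rewrite e3 in V; rewrite -V.
rewrite -(big_mkord xpredT (fun i => qbinom t l (i + 1) * qbinom t (m - 1) i * t ^+ (i * (i + 1)))).
rewrite -(big_mkord xpredT (fun i => qbinom t l i.+1 * (t ^+ (i.+1 * (i.+1 - 1)) * qbinom t (m - 1) i))).
have z : \sum_(l <= i < l + m) qbinom t l (i + 1) * qbinom t (m - 1) i * t ^+ (i * (i + 1)) = 0.
  rewrite big_nat_cond big1 // => i /andP[/andP[hi _] _].
  by rewrite qb_gt ?mul0r //; lia.
rewrite [in RHS](big_cat_nat (n := l)) /=; [|lia|lia].
rewrite z addr0.
apply: eq_bigr => i _.
have -> : (i.+1 * (i.+1 - 1) = i * (i + 1))%N by lia.
by rewrite addn1 -mulrA [t ^+ _ * _]mulrC.
Qed.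

Lemma Hq_tq m : qpoch tq tq m != 0.
Proof.
rewrite /qpoch prodf_seq_neq0; apply/allP => i _; apply/implyP => _.
rewrite /tq -tofracXn -tofracM -tofrac1 -tofracB tofrac_eq0.
apply/eqP => h; have := congr1 (fun p : {poly int} => p`_0) h.
by rewrite /= coefB coef1 -exprS coefXn coef0 subr0.
Qed.

Unset Implicit Arguments.

Theorem mainTheorem9 (n l : nat) (hn : (1 <= n)%N) (hl : (1 <= l)%N) :
  \sum_(s : l.-tuple 'I_n.+1 | is_partition n (map val s))
     tq ^+ (2 * nfun (map val s))
       * (qpoch tq tq l
          / \prod_(1 <= j < n.+1) qpoch tq tq (mult j (map val s)))
  = tq ^+ (l * (l - 1)) * qbinom tq (n - 1) (l - 1).
Proof.
rewrite -(main_gen Hq_tq hn hl) /Fs /Lpart big_filter big_map.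
apply: eq_bigr => s /and3P[_ _ /eqP hs].
by rewrite /Tp hs size_map size_tuple.
Qed.
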